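(* Let $J\subseteq\mathcal I_{int}$ be finite and let $\kappa,\kappa'$ be $J$-interval words over $\Sigma$ with $\kappa\sim\kappa'$. If for every $I\in J$, $\mathsf{first}(\kappa,I)=\mathsf{first}(\kappa',I)$ and $\mathsf{last}(\kappa,I)=\mathsf{last}(\kappa',I)$, then $\kappa\cong\kappa'$.
   Context: Fix a finite set $\Sigma$ of propositions. A timed word over $\Sigma$ is a finite sequence $\rho=(\sigma_1,\tau_1)\cdots(\sigma_n,\tau_n)$ with $\emptyset\neq\sigma_i\subseteq\Sigma$, $\tau_i\in\mathbb R_{\ge0}$, $\tau_1=0$, $\tau_i\le\tau_j$ for $i\le j$; $dom(\rho)=\{1,\dots,n\}$; a pointed timed word is a pair $(\rho,i)$ with $i\in dom(\rho)$. $\mathcal I_{int}$ is the set of open, half-open or closed real intervals with endpoints in $\mathbb Z\cup\{-\infty,\infty\}$. Interval words: let $J\subseteq\mathcal I_{int}$ be finite and $\mathsf{anch}$ a fresh symbol. A $J$-interval word over $\Sigma$ is a finite word $\kappa=a_1\cdots a_n$ with $a_j\subseteq\Sigma\cup J\cup\{\mathsf{anch}\}$ such that exactly one position $i$, denoted $\mathsf{anch}(\kappa)$, has $\mathsf{anch}\in a_i$, and $a_i\subseteq\Sigma\cup\{\mathsf{anch}\}$ there. For $I\in J$, position $j$ is $I$-time restricted iff $I\in a_j$. A pointed timed word $(\rho,i)$ with $\rho=(\sigma_1,\tau_1)\cdots(\sigma_m,\tau_m)$ is consistent with $\kappa$ iff $m=n$, $i=\mathsf{anch}(\kappa)$, $\sigma_j=a_j\cap\Sigma$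 for all $j$, and $\tau_j-\tau_i\in I$ for all $j\neq i$ and all $I\in a_j\cap J$. $\mathsf{Time}(\kappa)$ is the set of pointed timed words consistent with $\kappa$. Interval words $\kappa=a_1\cdots a_n$, $\kappa'=b_1\cdots b_m$ are similar ($\kappa\sim\kappa'$) iff $n=m$, $a_j\cap\Sigma=b_j\cap\Sigma$ for all $j$ and $\mathsf{anch}(\kappa)=\mathsf{anch}(\kappa')$; congruent ($\kappa\cong\kappa'$) iff $\mathsf{Time}(\kappa)=\mathsf{Time}(\kappa')$. $\mathsf{first}(\kappa,I)$ and $\mathsf{last}(\kappa,I)$ denote the least and greatest $I$-time restricted positions of $\kappa$ ($\bot$ if there is none). *)

(* Defs.v *)
From HB Require Import structures.
From mathcomp Require Import all_boot all_order all_algebra.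
From mathcomp Require Import reals.
Set Implicit Arguments. Unset Strict Implicit. Unset Printing Implicit Defensive.
Import Order.TTheory GRing.Theory Num.Theory.
Local Open Scope ring_scope.

(* Intervals of I_int: mathcomp intervals with bounds in int (or +-oo),
   open/closed on each side.  Membership of a real number: map the integer
   endpoints into the reals. *)
Definition bound_to_real (R : realType) (b : itv_bound int) : itv_bound R :=
  match b with
  | BSide s z => BSide s (z%:~R : R)
  | BInfty s => BInfty R s
  end.

Definition itv_to_real (R : realType) (I : interval int) : interval R :=
  let: Interval l u := I in Interval (bound_to_real R l) (bound_to_real R u).

Definition in_itv (R : realType) (x : R) (I : interval int) : bool :=
  x \in itv_to_real R I.

(* A letter a_j of an interval word, a subset of Sigma u J u {anch}:
   its propositions, its intervals, and whether it contains anch. *)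
Record letter (Sigma : finType) := Letter {
  lsig : {set Sigma};
  lint : seq (interval int);
  lanch : bool }.

Definition dflt_letter (Sigma : finType) : letter Sigma := Letter set0 [::] false.

(* J-interval word; J (a finite subset of I_int) is given as a list.
   Positions are 0-indexed: position j of the Rocq list is position j+1 of
   the paper. *)
Definition interval_word (Sigma : finType) (J : seq (interval int))
    (k : seq (letter Sigma)) : Prop :=
  [/\ forall j, (j < size k)%N ->
        forall I, I \in lint (nth (dflt_letter Sigma) k j) -> I \in J,
      count (@lanch Sigma) k = 1%N &
      forall j, (j < size k)%N -> lanch (nth (dflt_letter Sigma) k j) ->
        lint (nth (dflt_letter Sigma) k j) = [::]].

Definition anch (Sigma : finType) (k : seq (letter Sigma)) : nat :=
  find (@lanch Sigma) k.

Definition restricted (Sigma : finType) (k : seq (letter Sigma))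
    (I : interval int) (j : nat) : bool :=
  I \in lint (nth (dflt_letter Sigma) k j).

(* first/last I-time-restricted position, None playing the role of bottom *)
Definition first_pos (Sigma : finType) (k : seq (letter Sigma)) (I : interval int)
    : option nat :=
  let P := fun a : letter Sigma => I \in lint a in
  if has P k then Some (find P k) else None.

Definition last_pos (Sigma : finType) (k : seq (letter Sigma)) (I : interval int)
    : option nat :=
  let P := fun a : letter Sigma => I \in lint a in
  if has P k then Some ((size k).-1 - find P (rev k))%N else None.

Definition timed_word (Sigma : finType) (R : realType) (rho : seq ({set Sigma} * R))
    : Prop :=
  [/\ forall j, (j < size rho)%N -> (nth (set0, 0) rho j).1 != set0,
      forall j, (j < size rho)%N -> j = 0%N -> (nth (set0, 0) rho j).2 = 0 &
      forall i j, (i <= j)%N -> (j < size rho)%N ->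
        (nth (set0, 0) rho i).2 <= (nth (set0, 0) rho j).2].

Definition consistent (Sigma : finType) (R : realType) (k : seq (letter Sigma))
    (rho : seq ({set Sigma} * R)) (i : nat) : Prop :=
  [/\ timed_word rho, (i < size rho)%N,
      size rho = size k /\ i = anch k,
      forall j, (j < size k)%N ->
        (nth (set0, 0) rho j).1 = lsig (nth (dflt_letter Sigma) k j) &
      forall j, (j < size k)%N -> j <> i ->
        forall I, I \in lint (nth (dflt_letter Sigma) k j) ->
          in_itv ((nth (set0, 0) rho j).2 - (nth (set0, 0) rho i).2) I].

Definition similar_iw (Sigma : finType) (k k' : seq (letter Sigma)) : Prop :=
  [/\ size k = size k',
      forall j, (j < size k)%N ->
        lsig (nth (dflt_letter Sigma) k j) = lsig (nth (dflt_letter Sigma) k' j) &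
      anch k = anch k'].

Definition congruent_iw (Sigma : finType) (R : realType) (k k' : seq (letter Sigma)) : Prop :=
  forall (rho : seq ({set Sigma} * R)) (i : nat),
    consistent k rho i <-> consistent k' rho i.

(* Main.v *)
Require Import Defs.
From HB Require Import structures.
From mathcomp Require Import all_boot all_order all_algebra.
From mathcomp Require Import reals.
From mathcomp Require Import zify.
Import Order.TTheory GRing.Theory Num.Theory.

Lemma conv (R : realType) (x y z : R) (I : interval R) :
  x \in I -> z \in I -> (x <= y)%R -> (y <= z)%R -> y \in I.
Proof.
case: I => l u; rewrite !itv_boundlr => /andP[lx _] /andP[_ zu] xy yz.
apply/andP; split.
  by apply: le_trans lx _; rewrite leBSide /=.
by apply: le_trans zu; rewrite leBSide /=.
Qed.

Section S.
Variables (Sigma : finType).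
Implicit Types (k : seq (letter Sigma)).

Lemma first_spec k I f : first_pos k I = Some f ->
  (f < size k)%N /\ restricted k I f.
Proof.
rewrite /first_pos; case: ifP => // h [<-]; split; first by rewrite -has_find.
exact: (nth_find (dflt_letter Sigma) h).
Qed.

Lemma last_spec k I f : last_pos k I = Some f ->
  (f < size k)%N /\ restricted k I f.
Proof.
rewrite /last_pos; case: ifP => // h [<-].
have hr : has (fun a : letter Sigma => I \in lint a) (rev k) by rewrite has_rev.
have lt : (find (fun a : letter Sigma => I \in lint a) (rev k) < size k)%N.
  by rewrite -(size_rev k) -has_find.
have sz : (0 < size k)%N by apply: leq_ltn_trans lt.
split; first by lia.
have := nth_find (dflt_letter Sigma) hr.
rewrite nth_rev // /restricted.
by have -> : (size k - (find (fun a : letter Sigma => I \in lint a) (rev k)).+1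
   = (size k).-1 - find (fun a : letter Sigma => I \in lint a) (rev k))%N by lia.
Qed.

Lemma bound_spec k I j : (j < size k)%N -> restricted k I j ->
  exists f l, [/\ first_pos k I = Some f, last_pos k I = Some l,
     (f <= j)%N & (j <= l)%N].
Proof.
move=> js r.
have h : has (fun a : letter Sigma => I \in lint a) k.
  by apply/(has_nthP (dflt_letter Sigma)); exists j.
rewrite /first_pos /last_pos h.
eexists; eexists; split; [reflexivity|reflexivity| |].
  rewrite leqNgt; apply/negP => lt.
  by have := before_find (dflt_letter Sigma) lt; rewrite /restricted in r; rewrite r.
have m : ((size k).-1 - j < size k)%N.
  by lia.
have : (find (fun a : letter Sigma => I \in lint a) (rev k) <= (size k).-1 - j)%N.
  rewrite leqNgt; apply/negP => lt.
  have := before_find (dflt_letter Sigma) lt.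
  rewrite nth_rev //.
  have -> : (size k - ((size k).-1 - j).+1 = j)%N.
    by lia.
  by rewrite /restricted in r; rewrite r.
move=> le; lia.
Qed.

End S.

Lemma anch_empty (Sigma : finType) J (k : seq (letter Sigma)) I :
  interval_word J k -> ~~ restricted k I (anch k).
Proof.
case=> _ c e.
have h : has (@lanch Sigma) k by rewrite has_count c.
have lt : (anch k < size k)%N by rewrite /anch -has_find.
by rewrite /restricted e // /anch; exact: nth_find.
Qed.

Lemma dir (Sigma : finType) (R : realType) (J : seq (interval int))
    (k k' : seq (letter Sigma)) :
  interval_word J k -> interval_word J k' -> similar_iw k k' ->
  (forall I, I \in J -> first_pos k I = first_pos k' I /\ last_pos k I = last_pos k' I) ->
  forall rho i, consistent (R:=R) k rho i -> consistent k' rho i.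
Proof.
move=> iw iw' [sz sg an] H rho i [tw ir [sr ia] hs hi].
have tw' := tw; case: tw' => _ _ mono.
split => //.
- by rewrite -sz -an.
- by move=> j; rewrite -sz => js; rewrite hs // sg.
move=> j js ji I II.
have IJ : I \in J by case: iw' => h _ _; exact: (h j js).
have [f [l [ff ll fj jl]]] := @bound_spec _ _ _ _ js II.
have [Hf Hl] := H I IJ.
rewrite -Hf in ff; rewrite -Hl in ll.
have [fs fr] := @first_spec _ _ _ _ ff.
have [ls lr] := @last_spec _ _ _ _ ll.
have na := @anch_empty _ _ _ I iw.
have fi : f <> i by move=> e; move: na; rewrite -ia -e fr.
have li : l <> i by move=> e; move: na; rewrite -ia -e lr.
have jsr : (j < size rho)%N by rewrite sr sz.
have lsr : (l < size rho)%N by rewrite sr.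
have A := hi f fs fi I fr.
have B := hi l ls li I lr.
rewrite /Defs.in_itv in A B *.
apply: (@conv _ _ _ _ _ A B).
- by rewrite lerD2r; apply: mono.
- by rewrite lerD2r; apply: mono.
Qed.

Theorem lemma6 (Sigma : finType) (R : realType) (J : seq (interval int))
    (k k' : seq (letter Sigma)) :
  interval_word J k -> interval_word J k' -> similar_iw k k' ->
  (forall I, I \in J -> first_pos k I = first_pos k' I /\ last_pos k I = last_pos k' I) ->
  congruent_iw R k k'.
Proof.
move=> iw iw' sim H rho i; split; first exact: (@dir _ R _ _ _ iw iw' sim H).
apply: (@dir _ R _ _ _ iw' iw) => //.
- case: sim => sz sg an; split => //.
  by move=> j; rewrite -sz => js; rewrite sg.
- by move=> I IJ; have [-> ->] := H I IJ.
Qed.
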